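(* Let $q_1,q_2\in\mathbb{Z}$, $X$ a nonempty finite set and $f\in\mathrm{Bool}(X)$. There exists an ordered sequence $(X_1,\ldots,X_k)$ of nonempty pairwise disjoint subsets of $X$ with union $X$ such that each $f_{\mid X_i}$ is $(q_1,q_2)$-indecomposable and $f=f_{\mid X_1}\star_{q_1,q_2}\cdots\star_{q_1,q_2}f_{\mid X_k}$. Moreover, if $(Y_1,\ldots,Y_l)$ is another such sequence with the same two properties, then $k=l$ and there exists a permutation $\sigma$ of $\{1,\ldots,k\}$ with $Y_i=X_{\sigma(i)}$ for all $i$.
   Context: For a finite set $X$, a boolean function on $X$ is a map $f:\mathcal{P}(X)\to\mathbb{Z}$ with $f(\emptyset)=0$; $\mathrm{Bool}(X)$ is the set of these. Throughout, $0^0=1$. For disjoint finite sets $X,Y$, $f\in\mathrm{Bool}(X)$, $g\in\mathrm{Bool}(Y)$, $(f\star_{q_1,q_2}g)(A)=q_1^{|A\cap Y|}f(A\cap X)+q_2^{|A\cap X|}g(A\cap Y)$ for $A\subseteq X\sqcup Y$; this product is associative. For $Y\subseteq X$, $f_{\mid Y}\in\mathrm{Bool}(Y)$ denotes the restriction of $f$ to $\mathcal{P}(Y)$. For $X$ nonempty, $f\in\mathrm{Bool}(X)$ is $(q_1,q_2)$-indecomposable if whenever $Y\subseteq X$, $f'\in\mathrm{Bool}(X\setminus Y)$, $f''\in\mathrm{Bool}(Y)$ and $f=f'\star_{q_1,q_2}f''$, then $Y=\emptyset$ or $Y=X$. *)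

(* Defs.v *)
(* The finite set X of the paper is the finType T itself;
   subsets of X are {set T}; a boolean function on X is f : {set T} -> int
   with f set0 = 0. A boolean function on a subset Y of T is represented by a
   function g : {set T} -> int with g set0 = 0, of which only the values on
   subsets of Y matter. *)
From HB Require Import structures.
From mathcomp Require Import all_boot all_order all_algebra all_fingroup.
Set Implicit Arguments. Unset Strict Implicit. Unset Printing Implicit Defensive.
Import Order.TTheory GRing.Theory Num.Theory.
Local Open Scope ring_scope.

Section BoolFun.
Variable T : finType.
Variables q1 q2 : int.

Definition star (X Y : {set T}) (f g : {set T} -> int) : {set T} -> int :=
  fun A => q1 ^+ #|A :&: Y| * f (A :&: X) + q2 ^+ #|A :&: X| * g (A :&: Y).

Definition eq_on (X : {set T}) (f g : {set T} -> int) : Prop :=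
  forall A : {set T}, A \subset X -> f A = g A.

Definition indecomposable (X : {set T}) (f : {set T} -> int) : Prop :=
  X != set0 /\
  forall (Y : {set T}) (f' f'' : {set T} -> int),
    Y \subset X -> f' set0 = 0 -> f'' set0 = 0 ->
    eq_on X f (star (X :\: Y) Y f' f'') ->
    Y = set0 \/ Y = X.

(* f_{|X_1} * f_{|X_2} * ... * f_{|X_k} (right-associated; the product is
   associative), as a boolean function on X_1 ∪ ... ∪ X_k *)
Fixpoint bigstar (f : {set T} -> int) (s : seq {set T}) : {set T} -> int :=
  match s with
  | [::] => fun _ => 0
  | Y :: s' => star Y (\bigcup_(Z <- s') Z) f (bigstar f s')
  end.

Definition good_decomp (f : {set T} -> int) (s : seq {set T}) : Prop :=
  [/\ forall i, (i < size s)%N -> nth set0 s i != set0,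
      forall i j, (i < size s)%N -> (j < size s)%N -> i != j ->
        [disjoint nth set0 s i & nth set0 s j],
      \bigcup_(Z <- s) Z = [set: T],
      forall i, (i < size s)%N -> indecomposable (nth set0 s i) f
    & eq_on [set: T] f (bigstar f s)].

End BoolFun.

(* Main.v *)
Require Import Defs.
From HB Require Import structures.
From mathcomp Require Import all_boot all_order all_algebra all_fingroup.
From Stdlib Require Import Classical.
From mathcomp Require Import ring zify.
Set Implicit Arguments. Unset Strict Implicit. Unset Printing Implicit Defensive.
Import Order.TTheory GRing.Theory Num.Theory.
Local Open Scope ring_scope.

Lemma disjE (T : finType) (A B : {set T}) :
  [disjoint A & B] -> forall x, x \in A -> x \in B -> False.
Proof.
rewrite -setI_eq0 => /eqP h x ha hb.
have : x \in A :&: B by rewrite inE ha hb.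
by rewrite h inE.
Qed.

Lemma disjI (T : finType) (A B : {set T}) :
  (forall x, x \in A -> x \in B -> False) -> [disjoint A & B].
Proof.
move=> h; rewrite -setI_eq0; apply/eqP/setP => x; rewrite !inE.
case: (boolP (x \in A)) => ha //; case: (boolP (x \in B)) => hb //.
by case: (h x ha hb).
Qed.

Lemma mem_bigcup_seq (T : finType) (s : seq {set T}) x :
  (x \in \bigcup_(Z <- s) Z) = has (fun Z : {set T} => x \in Z) s.
Proof.
elim: s => [|Y s IH]; first by rewrite big_nil inE.
by rewrite big_cons inE IH.
Qed.

Fixpoint disj (T : finType) (s : seq {set T}) : bool :=
  if s is Y :: s' then [disjoint Y & \bigcup_(Z <- s') Z] && disj s' else true.

Lemma bigstar_dep (q1 q2 : int) (T : finType) (f : {set T} -> int) s A :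
  bigstar q1 q2 f s A = bigstar q1 q2 f s (A :&: \bigcup_(Z <- s) Z).
Proof.
case: s => [|Y s] //=.
rewrite /star big_cons; set U := \bigcup_(Z <- s) Z.
have -> : A :&: (Y :|: U) :&: Y = A :&: Y.
  by apply/setP => x; rewrite !inE; case: (x \in A); case: (x \in Y); case: (x \in U).
have -> : A :&: (Y :|: U) :&: U = A :&: U.
  by apply/setP => x; rewrite !inE; case: (x \in A); case: (x \in Y); case: (x \in U).
by [].
Qed.

Lemma bigstar0 (q1 q2 : int) (T : finType) (f : {set T} -> int) s :
  f set0 = 0 -> bigstar q1 q2 f s set0 = 0.
Proof.
move=> hf; elim: s => [|Y s IH] //=.
by rewrite /star !set0I IH hf cards0 !expr0 !mul1r addr0.
Qed.

Lemma cardsU_dis (T : finType) (A B : {set T}) :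
  [disjoint A & B] -> #|A :|: B| = (#|A| + #|B|)%N.
Proof.
move=> h; rewrite cardsU.
have -> : A :&: B = set0 by apply/eqP; rewrite setI_eq0.
by rewrite cards0 subn0.
Qed.

Lemma bigstar_cat (q1 q2 : int) (T : finType) (f : {set T} -> int) s1 s2 A :
  disj s1 -> [disjoint \bigcup_(Z <- s1) Z & \bigcup_(Z <- s2) Z] ->
  bigstar q1 q2 f (s1 ++ s2) A =
    q1 ^+ #|A :&: \bigcup_(Z <- s2) Z| * bigstar q1 q2 f s1 (A :&: \bigcup_(Z <- s1) Z)
  + q2 ^+ #|A :&: \bigcup_(Z <- s1) Z| * bigstar q1 q2 f s2 (A :&: \bigcup_(Z <- s2) Z).
Proof.
set U2 := \bigcup_(Z <- s2) Z.
elim: s1 A => [|Y s1 IH] A /=.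
  by move=> _ _; rewrite big_nil setI0 cards0 expr0 mul1r mulr0 add0r -bigstar_dep.
set U1 := \bigcup_(Z <- s1) Z.
move=> /andP [hY hs1]; rewrite big_cons -/U1 => hd.
have dY : forall x, x \in Y -> x \in U1 -> False by apply: disjE.
have d12 : forall x, x \in Y :|: U1 -> x \in U2 -> False by apply: disjE.
rewrite /star big_cat /= -/U1 -/U2 IH //; last first.
  by apply: disjI => x h1 h2; apply: (d12 x); rewrite ?inE ?h1 ?orbT.
have -> : A :&: (U1 :|: U2) :&: U2 = A :&: U2.
  by apply/setP => x; rewrite !inE; case: (x \in A); case: (x \in U1); case: (x \in U2).
have -> : A :&: (U1 :|: U2) :&: U1 = A :&: U1.
  by apply/setP => x; rewrite !inE; case: (x \in A); case: (x \in U1); case: (x \in U2).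
have -> : A :&: (Y :|: U1) :&: U1 = A :&: U1.
  by apply/setP => x; rewrite !inE; case: (x \in A); case: (x \in U1); case: (x \in Y).
have -> : A :&: (Y :|: U1) :&: Y = A :&: Y.
  by apply/setP => x; rewrite !inE; case: (x \in A); case: (x \in U1); case: (x \in Y).
have -> : A :&: (U1 :|: U2) = (A :&: U1) :|: (A :&: U2) by rewrite setIUr.
have -> : A :&: (Y :|: U1) = (A :&: Y) :|: (A :&: U1) by rewrite setIUr.
rewrite !cardsU_dis; first last.
- apply: disjI => x; rewrite !inE => /andP[_ h1] /andP[_ h2].
  by apply: (d12 x); rewrite ?inE ?h1 ?orbT.
- apply: disjI => x; rewrite !inE => /andP[_ h1] /andP[_ h2]; exact: (dY x h1 h2).
rewrite !exprD; ring.
Qed.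

Definition Pd (q1 q2 : int) (T : finType) (f : {set T} -> int) (U : {set T}) (s : seq {set T}) : Prop :=
  [/\ set0 \notin s, disj s, \bigcup_(Z <- s) Z = U,
      forall Z : {set T}, Z \in s -> indecomposable q1 q2 Z f
    & forall A : {set T}, A \subset U -> f A = bigstar q1 q2 f s A].

Lemma disj_cat (T : finType) (s1 s2 : seq {set T}) :
  disj s1 -> disj s2 -> [disjoint \bigcup_(Z <- s1) Z & \bigcup_(Z <- s2) Z] ->
  disj (s1 ++ s2).
Proof.
elim: s1 => [|Y s1 IH] //= /andP[hY h1] h2; rewrite big_cons => hd.
apply/andP; split; last first.
  apply: IH => //; apply: disjI => x hx hx'; apply: (disjE hd _ hx').
  by rewrite inE hx orbT.
rewrite big_cat; apply: disjI => x hx; rewrite inE => /orP [h|h].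
  exact: (disjE hY hx h).
by apply: (disjE hd _ h); rewrite inE hx.
Qed.

Lemma dec_empty (q1 q2 : int) (T : finType) (f : {set T} -> int) :
  f set0 = 0 -> Pd q1 q2 f set0 [::].
Proof.
move=> hf; split => //=; first by rewrite big_nil.
by move=> A; rewrite subset0 => /eqP ->.
Qed.

Lemma dec_indec (q1 q2 : int) (T : finType) (f : {set T} -> int) (U : {set T}) :
  indecomposable q1 q2 U f -> Pd q1 q2 f U [:: U].
Proof.
move=> hi; have [hU0 _] := hi; split => //=.
- by rewrite inE eq_sym.
- by rewrite andbT; apply: disjI => x _; rewrite big_nil inE.
- by rewrite big_seq1.
- by move=> Z; rewrite inE => /eqP ->.
move=> A hA; rewrite /star big_nil setI0 cards0 expr0 mul1r mulr0 addr0.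
by rewrite (setIidPl hA).
Qed.

Lemma split_star (q1 q2 : int) (T : finType) (f f' f'' : {set T} -> int) (U Y : {set T}) :
  f' set0 = 0 -> f'' set0 = 0 -> Y \subset U ->
  eq_on U f (star q1 q2 (U :\: Y) Y f' f'') ->
  forall A : {set T}, A \subset U -> f A = q1 ^+ #|A :&: Y| * f (A :&: (U :\: Y))
                               + q2 ^+ #|A :&: (U :\: Y)| * f (A :&: Y).
Proof.
move=> h1 h2 hYU heq.
have ef' : forall B : {set T}, B \subset U :\: Y -> f B = f' B.
  move=> B hB; rewrite heq; last first.
    by apply: (subset_trans hB); apply: subsetDl.
  rewrite /star.
  have -> : B :&: Y = set0.
    apply/setP => x; rewrite !inE; have := subsetP hB x; rewrite !inE.
    by case: (x \in B); case: (x \in Y) => //= /(_ isT).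
  have -> : B :&: (U :\: Y) = B by apply/setIidPl.
  by rewrite cards0 expr0 mul1r h2 mulr0 addr0.
have ef'' : forall B : {set T}, B \subset Y -> f B = f'' B.
  move=> B hB; rewrite heq; last exact: (subset_trans hB).
  rewrite /star.
  have -> : B :&: (U :\: Y) = set0.
    apply/setP => x; rewrite !inE; have := subsetP hB x.
    by case: (x \in B); case: (x \in Y) => //= /(_ isT).
  have -> : B :&: Y = B by apply/setIidPl.
  by rewrite cards0 expr0 mul1r h1 mulr0 add0r.
move=> A hA; rewrite heq // /star ef' ?subsetIr // ef'' ?subsetIr //.
Qed.

Lemma exist_dec (q1 q2 : int) (T : finType) (f : {set T} -> int) :
  f set0 = 0 -> forall n (U : {set T}), (#|U| <= n)%N -> exists s, Pd q1 q2 f U s.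
Proof.
move=> hf; elim=> [|n IH] U hU.
  have -> : U = set0 by apply/eqP; rewrite -cards_eq0 -leqn0.
  by exists [::]; apply: dec_empty.
case: (eqVneq U set0) => [->|hU0]; first by exists [::]; apply: dec_empty.
case: (classic (indecomposable q1 q2 U f)) => hind.
  by exists [:: U]; apply: dec_indec.
have [Y [f' [f'' [hYU [h1 [h2 [heq hne]]]]]]] : exists (Y : {set T}) (f' f'' : {set T} -> int),
    Y \subset U /\ f' set0 = 0 /\ f'' set0 = 0 /\
    eq_on U f (star q1 q2 (U :\: Y) Y f' f'') /\ ~ (Y = set0 \/ Y = U).
  apply: NNPP => hn; apply: hind; split => // Y f' f'' a b c d.
  apply: NNPP => e; apply: hn; exists Y, f', f''; done.
have hY0 : Y != set0 by apply/eqP => e; apply: hne; left.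
have hYU' : Y != U by apply/eqP => e; apply: hne; right.
have hsplit := split_star h1 h2 hYU heq.
have c1 : (#|U :\: Y| <= n)%N.
  rewrite cardsD (setIidPr hYU).
  rewrite -card_gt0 in hY0; lia.
have c2 : (#|Y| <= n)%N.
  have : (#|Y| < #|U|)%N by apply: proper_card; rewrite properEneq hYU' hYU.
  by move=> h; rewrite -ltnS (leq_trans h hU).
have [s1 [n1 d1 u1 i1 e1]] := IH _ c1.
have [s2 [n2 d2 u2 i2 e2]] := IH _ c2.
have dU : [disjoint \bigcup_(Z <- s1) Z & \bigcup_(Z <- s2) Z].
  by rewrite u1 u2; apply: disjI => x; rewrite !inE => /andP [/negP h _].
exists (s1 ++ s2); split.
- by rewrite mem_cat negb_or n1 n2.
- exact: disj_cat.
- rewrite big_cat /= u1 u2; apply/setP => x; rewrite !inE.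
  have := subsetP hYU x.
  by case: (x \in Y); case: (x \in U) => // /(_ isT).
- by move=> Z; rewrite mem_cat => /orP [] h; [apply: i1 | apply: i2].
move=> A hA; rewrite bigstar_cat // u1 u2 -e1 ?subsetIr // -e2 ?subsetIr //.
exact: hsplit.
Qed.

Ltac fin := intros; repeat match goal with | H : is_true true -> _ |- _ => specialize (H isT) end;
  first [done | discriminate | contradiction].

Lemma contain (q1 q2 : int) (T : finType) (f : {set T} -> int) :
  f set0 = 0 -> forall (t : seq {set T}) (U X : {set T}),
  Pd q1 q2 f U t -> X \subset U -> indecomposable q1 q2 X f ->
  exists2 Y, Y \in t & X \subset Y.
Proof.
move=> hf; elim=> [|Y t IH] U X [n d u i e] hXU [hX0 hXi].
  move: u; rewrite big_nil => hU; move: hXU; rewrite -hU subset0 => hX.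
  by rewrite hX in hX0.
set U' := \bigcup_(Z <- t) Z.
move: d => /= /andP [dY dt]; move: u; rewrite big_cons -/U' => u.
have dY' : forall x, x \in Y -> x \in U' -> False by apply: disjE.
have et : forall A : {set T}, A \subset U' -> f A = bigstar q1 q2 f t A.
  move=> A hA; rewrite e; last by rewrite -u; apply: (subset_trans hA); apply: subsetUr.
  rewrite /= /star -/U' (setIidPl hA).
  have -> : A :&: Y = set0.
    apply/setP => x; rewrite !inE; move: (subsetP hA x) (dY' x).
    by case: (x \in A); case: (x \in Y); case: (x \in U'); fin.
  by rewrite hf cards0 expr0 mulr0 add0r mul1r.
have esplit : forall A : {set T}, A \subset U ->
    f A = q1 ^+ #|A :&: U'| * f (A :&: Y) + q2 ^+ #|A :&: Y| * f (A :&: U').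
  by move=> A hA; rewrite e //= /star -/U' -et ?subsetIr.
set W := X :&: U'.
have : W = set0 \/ W = X.
  apply: (hXi W f f (subsetIl _ _) hf hf) => A hA.
  rewrite /star esplit; last exact: (subset_trans hA hXU).
  have -> : A :&: W = A :&: U'.
    apply/setP => x; rewrite !inE; move: (subsetP hA x).
    by case: (x \in A); case: (x \in X); case: (x \in U'); fin.
  have -> : A :&: (X :\: W) = A :&: Y.
    apply/setP => x; rewrite !inE; move: (subsetP hA x) (subsetP hXU x).
    rewrite -u !inE; move: (dY' x).
    by case: (x \in A); case: (x \in X); case: (x \in Y); case: (x \in U'); fin.
  by [].
case => hW.
  exists Y; first exact: mem_head.
  apply/subsetP => x hx; have := subsetP hXU x hx; rewrite -u inE => /orP [//|hU'].
  have : x \in W by rewrite inE hx hU'.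
  by rewrite hW inE.
have hXU' : X \subset U' by rewrite -hW subsetIr.
have Pt : Pd q1 q2 f U' t.
  split => //.
  - by move: n; rewrite inE negb_or => /andP [_ ->].
  - by move=> Z hZ; apply: i; rewrite inE hZ orbT.
have [Z hZ hXZ] := IH U' X Pt hXU' (conj hX0 hXi).
by exists Z => //; rewrite inE hZ orbT.
Qed.

Definition ID (T : finType) (s : seq {set T}) : Prop :=
  forall i j, (i < size s)%N -> (j < size s)%N -> i != j ->
    [disjoint nth set0 s i & nth set0 s j].

Lemma disj_ID (T : finType) (s : seq {set T}) : disj s -> ID s.
Proof.
elim: s => [|Y s IH] /=; first by move=> _ i j.
move=> /andP [hY hs] [|i] [|j] //= hi hj hij.
- apply: disjI => x hx hx'; apply: (disjE hY hx); rewrite mem_bigcup_seq.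
  by apply/hasP; exists (nth set0 s j) => //; apply: mem_nth.
- rewrite disjoint_sym; apply: disjI => x hx hx'; apply: (disjE hY hx); rewrite mem_bigcup_seq.
  by apply/hasP; exists (nth set0 s i) => //; apply: mem_nth.
- exact: IH.
Qed.

Lemma ID_disj (T : finType) (s : seq {set T}) : ID s -> disj s.
Proof.
elim: s => [|Y s IH] //= h; apply/andP; split.
- apply: disjI => x hx; rewrite mem_bigcup_seq => /hasP [Z hZ hxZ].
  have [j hj eZ] := nthP set0 hZ.
  have := h 0%N j.+1 isT hj isT; rewrite /= eZ => hd.
  exact: (disjE hd hx hxZ).
- by apply: IH => i j hi hj hij; apply: (h i.+1 j.+1).
Qed.

Lemma good_to_P (q1 q2 : int) (T : finType) (f : {set T} -> int) s :
  good_decomp q1 q2 f s -> Pd q1 q2 f setT s.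
Proof.
case=> ha hb hc hd he; split => //.
- apply/negP => /(nthP set0) [i hi ei]; by move: (ha i hi); rewrite ei eqxx.
- exact: ID_disj.
- by move=> Z /(nthP set0) [i hi <-]; apply: hd.
Qed.

Lemma P_to_good (q1 q2 : int) (T : finType) (f : {set T} -> int) s :
  Pd q1 q2 f setT s -> good_decomp q1 q2 f s.
Proof.
case=> ha hb hc hd he; split => //.
- by move=> i hi; apply/eqP => e; move: ha; rewrite -e mem_nth.
- exact: disj_ID.
- by move=> i hi; apply: hd; apply: mem_nth.
Qed.

Lemma good_eq (q1 q2 : int) (T : finType) (f : {set T} -> int) s (X X' : {set T}) :
  good_decomp q1 q2 f s -> X \in s -> X' \in s -> X \subset X' -> X = X'.
Proof.
case=> ha hb _ _ _ hX hX' hsub; case: (eqVneq X X') => // hne; exfalso.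
have [i hi ei] := nthP set0 hX; have [j hj ej] := nthP set0 hX'.
have hij : i != j by apply: contraNneq hne => e; rewrite -ei -ej e.
have := hb i j hi hj hij; rewrite ei ej => hd.
have := ha i hi; rewrite ei => /set0Pn [x hx].
exact: (disjE hd hx (subsetP hsub x hx)).
Qed.

Lemma good_uniq (q1 q2 : int) (T : finType) (f : {set T} -> int) s :
  good_decomp q1 q2 f s -> uniq s.
Proof.
case=> ha hb _ _ _; apply/(uniqP set0) => i j; rewrite !inE => hi hj e.
apply/eqP; apply: contraT => hij; have := hb i j hi hj hij; rewrite e => hd.
have := ha j hj => /set0Pn [x hx].
by case: (disjE hd hx hx).
Qed.

Theorem lemma2p7 (q1 q2 : int) (T : finType) (f : {set T} -> int) :
  (0 < #|T|)%N -> f set0 = 0 ->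
  exists s : seq {set T},
    good_decomp q1 q2 f s /\
    forall t : seq {set T}, good_decomp q1 q2 f t ->
      size t = size s /\
      exists sigma : {perm 'I_(size s)},
        forall i : 'I_(size s), nth set0 t i = nth set0 s (sigma i).
Proof.
move=> hT hf.
have [s Ps] := exist_dec q1 q2 hf (leqnn #|[set: T]|).
have gs := P_to_good Ps.
exists s; split => // t gt.
have Pt := good_to_P gt.
have cst : forall X, X \in s -> exists2 Y, Y \in t & X \subset Y.
  by move=> X hX; apply: (contain hf Pt (subsetT X)); case: Ps => _ _ _ hi _; apply: hi.
have cts : forall X, X \in t -> exists2 Y, Y \in s & X \subset Y.
  by move=> X hX; apply: (contain hf Ps (subsetT X)); case: Pt => _ _ _ hi _; apply: hi.
have mem_eq : s =i t.
  move=> Z; apply/idP/idP => hZ.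
  - have [Y hY hZY] := cst Z hZ; have [X hX hYX] := cts Y hY.
    have e := good_eq gs hZ hX (subset_trans hZY hYX); subst X.
    suff -> : Z = Y by [].
    by apply/eqP; rewrite eqEsubset hZY hYX.
  - have [Y hY hZY] := cts Z hZ; have [X hX hYX] := cst Y hY.
    have e := good_eq gt hZ hX (subset_trans hZY hYX); subst X.
    suff -> : Z = Y by [].
    by apply/eqP; rewrite eqEsubset hZY hYX.
have us := good_uniq gs; have ut := good_uniq gt.
have hp : perm_eq s t := uniq_perm us ut mem_eq.
have hsz : size t = size s by rewrite (perm_size hp).
split => //.
have hin : forall i : 'I_(size s), nth set0 t i \in s.
  by move=> i; rewrite mem_eq mem_nth // hsz.
have hlt : forall i : 'I_(size s), (index (nth set0 t i) s < size s)%N.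
  by move=> i; rewrite index_mem.
pose g := fun i : 'I_(size s) => Ordinal (hlt i).
have ginj : injective g.
  move=> i j /(congr1 val) /= e.
  have := congr1 (nth set0 s) e; rewrite !nth_index // => e2.
  apply/val_inj/eqP; rewrite -(nth_uniq set0 _ _ ut) ?hsz ?e2 ?ltn_ord //.
by exists (perm ginj) => i; rewrite permE /= nth_index.
Qed.
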